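(* There is a constant $\hat C=\hat C(\alpha,\beta)$ such that for every $0\le h\in L^1(\mathbb R^d)$ and $t>0$, $$t^{-1}\int_0^t\|\psi_\tau h\|_1\,d\tau\le\hat C\,\|\psi_th\|_1.$$
   Context: Let $d\ge3$, $1<\alpha<2$, $\kappa>0$. Let $\gamma(a)=\frac{2^a\pi^{d/2}\Gamma(a/2)}{\Gamma(\frac d2-\frac a2)}$ and let $\beta\in]0,\alpha[$ be defined by $\beta\frac{d+\beta-2}{d+\beta-\alpha}\frac{\gamma(d+\beta-2)}{\gamma(d+\beta-\alpha)}=\kappa$. Let $\eta(u)=u^\beta$ for $0<u<1$, $\eta(u)=\beta u(2-\frac u2)+1-\frac32\beta$ for $1\le u\le2$, $\eta(u)=1+\frac\beta2$ for $u\ge2$, and $\psi_s(x)=\eta(s^{-1/\alpha}|x|)$ for $s>0$. *)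

(* Defs.v *)
From HB Require Import structures.
From mathcomp Require Import all_boot all_order all_algebra.
From mathcomp Require Import all_classical all_reals all_analysis.
Set Implicit Arguments. Unset Strict Implicit. Unset Printing Implicit Defensive.
Import Order.TTheory GRing.Theory Num.Theory.
Import numFieldNormedType.Exports.
Local Open Scope classical_set_scope.
Local Open Scope ring_scope.

Section Defs.
Variable R : realType.

Definition Gamma (a : R) : R :=
  Rintegral lebesgue_measure `]0, +oo[%classic
    (fun x : R => powR x (a - 1) * expR (- x)).

Definition gam (d : nat) (a : R) : R :=
  powR 2 a * powR pi (d%:R / 2) * Gamma (a / 2) / Gamma (d%:R / 2 - a / 2).

Definition beta_eq (d : nat) (alpha kappa beta : R) : Prop :=
  beta * ((d%:R + beta - 2) / (d%:R + beta - alpha))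
    * (gam d (d%:R + beta - 2) / gam d (d%:R + beta - alpha)) = kappa.

Definition eta (beta u : R) : R :=
  if u < 1 then powR u beta
  else if u <= 2 then beta * u * (2 - u / 2) + 1 - 3 / 2 * beta
  else 1 + beta / 2.

Definition enorm (d : nat) (x : d.-tuple R) : R :=
  Num.sqrt (\sum_(i < d) tnth x i ^+ 2).

Definition psi (alpha beta : R) (d : nat) (s : R) (x : d.-tuple R) : R :=
  eta beta (powR s (- alpha^-1) * enorm x).

(* Lebesgue integral over R^d of a function with values in \bar R,
   computed as an iterated integral w.r.t. the 1-dim Lebesgue measure
   (equal to the integral w.r.t. d-dim Lebesgue measure for
   nonnegative measurable functions, by Tonelli). *)
Fixpoint intRd (d : nat) : (d.-tuple R -> \bar R) -> \bar R :=
  match d return (d.-tuple R -> \bar R) -> \bar R with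
  | 0 => fun f => f [tuple]
  | n.+1 => fun f =>
      (\int[@lebesgue_measure R]_x intRd (fun t : n.-tuple R => f (cons_tuple x t)))%E
  end.

Definition L1norm (d : nat) (f : d.-tuple R -> R) : \bar R :=
  intRd (fun x => (`|f x|)%:E).

Definition Ioc (a b : R) : set R := `]a, b].

End Defs.

(* Main.v *)
Require Import Defs.
From HB Require Import structures.
From mathcomp Require Import all_boot all_order all_algebra.
From mathcomp Require Import all_classical all_reals all_analysis.
From mathcomp Require Import ring lra measurable_realfun.
Import Order.TTheory GRing.Theory Num.Theory.
Import numFieldNormedType.Exports.
Local Open Scope classical_set_scope.
Local Open Scope ring_scope.
Import HBNNSimple.

Set Implicit Arguments. Unset Strict Implicit.


Section S.
Variable R : realType.
Local Notation mu := (@lebesgue_measure R).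
Local Open Scope ereal_scope.

Lemma le_int_nm (D : set R) (f g : R -> \bar R) :
  (forall x, D x -> 0 <= f x) -> (forall x, D x -> f x <= g x) ->
  \int[mu]_(x in D) f x <= \int[mu]_(x in D) g x.
Proof.
move=> f0 fg.
have g0 x : D x -> 0 <= g x by move=> Dx; exact: le_trans (f0 _ Dx) (fg _ Dx).
rewrite !ge0_integralE//.
apply: ge_ereal_sup => _ [h hf <-].
apply: ereal_sup_ubound; exists h => // x.
exact: le_trans (hf x) (lee_restrict fg x).
Qed.

Lemma le_intZ_nm (D : set R) (f : R -> \bar R) (c : R) : (0 < c)%R ->
  (forall x, D x -> 0 <= f x) ->
  \int[mu]_(x in D) (c%:E * f x) <= c%:E * \int[mu]_(x in D) f x.
Proof.
move=> c0 f0.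
have cf0 x : D x -> 0 <= c%:E * f x.
  by move=> Dx; apply: mule_ge0; [rewrite lee_fin ltW|exact: f0].
rewrite !ge0_integralE//.
apply: ge_ereal_sup => _ [h hf <-].
have ci0 : (0 <= c^-1)%R by rewrite invr_ge0 ltW.
pose h' := scale_nnsfun h ci0.
have -> : sintegral mu h = c%:E * sintegral mu h'.
  rewrite -sintegralrM; apply: eq_sintegral => x /=.
  rewrite /h' /= mulrA divff ?mul1r // gt_eqF//.
rewrite lee_pmul2l ?lte_fin//.
apply: ereal_sup_ubound; exists h' => // x /=.
have := hf x; rewrite /patch; case: ifP => _ H; last first.
  by rewrite lee_fin in H *; exact: mulr_ge0_le0.
rewrite -(@lee_pmul2l _ c%:E) ?lte_fin// -EFinM mulrA divff ?gt_eqF// mul1r.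
exact: H.
Qed.

Lemma intRd_ge0 d (f : d.-tuple R -> \bar R) : (forall x, 0 <= f x) -> 0 <= intRd f.
Proof.
elim: d f => [|n IH] f f0 /=; first exact: f0.
apply: integral_ge0 => x _; apply: IH => t; exact: f0.
Qed.

Lemma intRd_le d (f g : d.-tuple R -> \bar R) : (forall x, 0 <= f x) ->
  (forall x, f x <= g x) -> intRd f <= intRd g.
Proof.
elim: d f g => [|n IH] f g f0 fg /=; first exact: fg.
apply: le_int_nm => x _; first by apply: intRd_ge0.
by apply: IH.
Qed.

Lemma intRd_Z d (f : d.-tuple R -> \bar R) (c : R) : (0 < c)%R -> (forall x, 0 <= f x) ->
  intRd (fun x => c%:E * f x) <= c%:E * intRd f.
Proof.
move=> c0; elim: d f => [|n IH] f f0 /=; first by [].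
apply: (@le_trans _ _ (\int[mu]_x (c%:E * intRd (fun t => f (cons_tuple x t))))).
  apply: le_int_nm => x _; last by apply: IH.
  by apply: intRd_ge0 => t; apply: mule_ge0; [rewrite lee_fin ltW|exact: f0].
apply: (@le_intZ_nm setT _ c c0) => x _; exact: intRd_ge0.
Qed.
End S.


Section E.
Variable R : realType.
Implicit Types b u v : R.

Lemma eta_lt1 b u : u < 1 -> Defs.eta b u = u `^ b.
Proof. by rewrite /Defs.eta => ->. Qed.

Lemma eta_ge1 b u : 0 < b < 2 -> 1 <= u -> 1 <= Defs.eta b u <= 2.
Proof.
move=> /andP[b0 b2] u1; rewrite /Defs.eta ltNge u1 /=; case: ifP => u2.
  have h1 : 0 <= (u - 1) * (3 - u) by apply: mulr_ge0; lra.
  have h2 : 0 <= (u - 2) ^+ 2 by apply: sqr_ge0.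
  apply/andP; split; nra.
apply/andP; split; lra.
Qed.

Lemma eta_ge0 b u : 0 < b < 2 -> 0 <= u -> 0 <= Defs.eta b u.
Proof.
move=> hb u0; have [u1|u1] := ltP u 1; first by rewrite eta_lt1// powR_ge0.
by have /andP[+ _] := eta_ge1 hb u1; apply: le_trans.
Qed.

Lemma eta_ratio b u v : 0 < b < 2 -> 0 <= u -> u <= v ->
  u `^ b * Defs.eta b v <= 2 * v `^ b * Defs.eta b u.
Proof.
move=> hb u0 uv; have v0 : 0 <= v by apply: le_trans uv.
have b0 : 0 <= b by case/andP: hb => /ltW.
have puv : u `^ b <= v `^ b by apply: ge0_ler_powR; rewrite ?nnegrE.
have pu0 : 0 <= u `^ b by apply: powR_ge0.
have ev0 := eta_ge0 hb v0.
have [u1|u1] := ltP u 1.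
  have [v1|v1] := ltP v 1.
    rewrite !eta_lt1//; have := powR_ge0 v b; nra.
  have /andP[_ ev2] := eta_ge1 hb v1.
  have pv1 : 1 <= v `^ b.
    have := @ge0_ler_powR R b b0 1 v; rewrite powR1 !nnegrE; apply => //.
  rewrite (eta_lt1 b u1); nra.
have /andP[eu1 _] := eta_ge1 hb u1.
have /andP[_ ev2] := eta_ge1 hb (le_trans u1 uv).
nra.
Qed.

Lemma psi_le (alpha beta : R) d (t tau : R) (x : d.-tuple R) :
  1 < alpha -> 0 < beta < 2 -> 0 < tau -> tau <= t ->
  psi alpha beta tau x <=
    2 * t `^ (alpha^-1 * beta) * tau `^ (- (alpha^-1 * beta)) * psi alpha beta t x.
Proof.
move=> a1 hb tau0 taut.
have t0 : 0 < t by apply: lt_le_trans taut.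
have b0 : 0 < beta by case/andP: hb.
rewrite /psi; set n := enorm x.
have n0 : 0 <= n by rewrite /n /enorm sqrtr_ge0.
have ai0 : 0 <= alpha^-1 by rewrite invr_ge0; lra.
have tt : t `^ (- alpha^-1) <= tau `^ (- alpha^-1).
  rewrite !powRN lef_pV2 ?posrE ?powR_gt0//.
  by apply: (@ge0_ler_powR R _ ai0) => //; rewrite nnegrE ltW.
set u := t `^ (- alpha^-1) * n; set v := tau `^ (- alpha^-1) * n.
have u0 : 0 <= u by rewrite mulr_ge0 ?powR_ge0.
have uv : u <= v by rewrite ler_wpM2r.
have [n00|npos] := eqVneq n 0.
  rewrite /u /v n00 !mulr0 eta_lt1 ?ltr01// powR0 ?gt_eqF// mulr0; lra.
have npos' : 0 < n by rewrite lt_neqAle eq_sym npos n0.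
have H := eta_ratio hb u0 uv.
rewrite /u /v in H. rewrite !powRM ?powR_ge0 // in H. rewrite -!powRrM mulNr in H.
rewrite [t `^ (- _)]powRN in H.
set P := t `^ (alpha^-1 * beta) in H *.
set S := tau `^ (- (alpha^-1 * beta)) in H *.
set N := n `^ beta in H.
have NP : 0 < N by rewrite powR_gt0.
have PP : 0 < P by rewrite powR_gt0.
set ev := Defs.eta beta v.
set eu := Defs.eta beta u.
have H2 : N * (P^-1 * ev) <= N * (2 * S * eu).
  by move: H; rewrite /ev /eu /u /v !mulrA; nra.
rewrite ler_pM2l// in H2.
rewrite -(ler_pM2l PP) mulrA mulfV ?gt_eqF// mul1r in H2.
apply: le_trans H2 _; rewrite !mulrA; lra.
Qed.
End E.


Section C.
Variable R : realType.
Local Notation mu := (@lebesgue_measure R).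

Definition q : R := 2^-1.
Definition Fk (t : R) (k : nat) : set R := `]t * q ^+ k.+1, t * q ^+ k]%classic.

Lemma q_gt0 : 0 < q. Proof. by rewrite /q invr_gt0. Qed.
Lemma q_lt1 : q < 1. Proof. by rewrite /q invf_lt1 ?ltr1n. Qed.

Lemma qS k : q ^+ k.+1 < q ^+ k.
Proof. by rewrite exprS gtr_pMl ?q_lt1 ?exprn_gt0 ?q_gt0. Qed.

Lemma Fk_cover (t : R) : 0 < t -> `]0, t]%classic = \bigcup_k Fk t k.
Proof.
move=> t0; apply/seteqP; split => [x /=|x [k _]]; last first.
  rewrite /Fk /= !in_itv /= => /andP[h1 h2]; apply/andP; split.
    by apply: le_lt_trans h1; rewrite mulr_ge0 ?ltW ?exprn_gt0 ?q_gt0.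
  apply: le_trans h2 _; rewrite -[leRHS]mulr1 ler_wpM2l//; [exact: ltW | exact: exprn_ile1 (ltW q_gt0) (ltW q_lt1)].
rewrite in_itv /= => /andP[x0 xt].
have ex : exists k, t * q ^+ k.+1 < x.
  exists (Num.truncn (t / x)); set n := Num.truncn (t / x).
  have h1 : t / x < (2 ^+ n.+1 : R).
    apply: lt_le_trans (truncnS_gt _) _.
    by rewrite -natrX ler_nat ltnW// ltn_expl.
  rewrite ltr_pdivrMr// in h1.
  by rewrite /q exprVn ltr_pdivrMr ?exprn_gt0// mulrC.
case: (ex_minnP ex) => m Pm Hmin.
exists m => //; rewrite /Fk /= in_itv /= Pm /=.
case: m Pm Hmin => [|m] Pm Hmin; first by rewrite expr0 mulr1.
by rewrite leNgt; apply/negP => /Hmin; rewrite ltnn.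
Qed.

Lemma qle i j : (i <= j)%N -> q ^+ j <= q ^+ i.
Proof. by move=> ij; apply: ler_wiXn2l => //; [exact: ltW q_gt0|exact: ltW q_lt1]. Qed.

Lemma Fk_triv (t : R) : 0 < t -> trivIset setT (Fk t).
Proof.
move=> t0 i j _ _ [x []]; rewrite /Fk /= !in_itv /= => /andP[a1 a2] /andP[b1 b2].
have H : forall i j, (i < j)%N -> t * q ^+ i.+1 < x -> x <= t * q ^+ j -> False.
  move=> i' j' ij h1 h2.
  have : t * q ^+ j' <= t * q ^+ i'.+1 by rewrite ler_wpM2l ?(ltW t0) ?qle.
  lra.
case: (ltngtP i j) => // ij; first by case: (H _ _ ij a1 b2).
by case: (H _ _ ij b1 a2).
Qed.

Definition A (g : R) : R := 2 `^ g * q.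

Lemma A_gt0 g : 0 < A g.
Proof. by rewrite /A mulr_gt0 ?powR_gt0 ?q_gt0. Qed.

Lemma A_lt1 g : g < 1 -> A g < 1.
Proof.
move=> g1; rewrite /A /q.
have : 2 `^ g < 2.
  rewrite /powR gt_eqF// -[X in _ < X]lnK ?posrE// ltr_expR.
  by rewrite gtr_pMl ?ln_gt0 ?ltr1n.
lra.
Qed.

Lemma lo_pow (t g : R) k : 0 < t ->
  (t * q ^+ k.+1) `^ (- g) = t `^ (- g) * (2 `^ g) ^+ k.+1.
Proof.
move=> t0; rewrite (powRM _ (ltW t0) (exprn_ge0 _ (ltW q_gt0))).
congr (_ * _).
have e1 : q ^+ k.+1 = q `^ (k.+1%:R) by rewrite powR_mulrn // (ltW q_gt0).
rewrite e1 -powRrM mulrC powRrM.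
have -> : q `^ (- g) = 2 `^ g by rewrite /q -powR_inv1// -powRrM mulN1r opprK.
by rewrite powR_mulrn // powR_ge0.
Qed.

Local Open Scope ereal_scope.
Lemma int_pow_bound (t g l : R) : (0 < t)%R -> (0 < g < 1)%R -> (0 <= l)%R ->
  \int[mu]_(x in `]0%R, t]%classic) ((x `^ (- g)) * l)%:E <=
  ((t `^ (- g)) * t * l * (A g / (1 - A g)))%:E.
Proof.
move=> t0 /andP[g0 g1] l0.
rewrite (Fk_cover t0) ge0_integral_bigcup //; first last.
- exact: Fk_triv t0.
- by move=> x _; rewrite lee_fin mulr_ge0 ?powR_ge0.
  apply/measurable_EFinP; apply: measurable_funTS.
  by apply: measurable_funM => //; exact: measurable_powR.
- by move=> k; exact: measurable_itv.
set K := (t `^ (- g) * t * l)%R.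
apply: (@le_trans _ _ (\sum_(k <oo) (K * A g ^+ k.+1)%:E)).
  apply: lee_nneseries => [k _ _|k _].
    by apply: integral_ge0 => x _; rewrite lee_fin mulr_ge0 ?powR_ge0.
  have mF : measurable (Fk t k) by exact: measurable_itv.
  have lo0 : (0 < t * q ^+ k.+1)%R by rewrite mulr_gt0 ?exprn_gt0 ?q_gt0.
  apply: (@le_trans _ _ (\int[mu]_(x in Fk t k) (cst (((t * q^+k.+1) `^ (-g)) * l)%:E x))).
    apply: ge0_le_integral => //.
    - by move=> x _; rewrite lee_fin mulr_ge0 ?powR_ge0.
    - apply/measurable_EFinP; apply: measurable_funTS.
      by apply: measurable_funM => //; exact: measurable_powR.
    - move=> x; rewrite /Fk /= in_itv /= => /andP[h1 h2].
      rewrite lee_fin ler_wpM2r // !powRN lef_pV2 ?posrE ?powR_gt0 //; last first.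
        exact: lt_trans h1.
      apply: (@ge0_ler_powR R _ (ltW g0)); rewrite ?nnegrE ?(ltW lo0) ?(ltW h1)//.
      exact: ltW (lt_trans lo0 h1).
  rewrite integral_cst // /Fk.
  rewrite [X in _ * X](_ : _ = (t * q ^+ k - t * q ^+ k.+1)%:E); last first.
    have := @lebesgue_measure_itv R `](t * q ^+ k.+1)%R, (t * q ^+ k)%R].
    by rewrite /= lte_fin ltr_pM2l ?qS //.
  have eqL : (t * q^+k - t * q^+k.+1 = t * q^+k.+1)%R.
    by rewrite exprS /q; field.
  rewrite eqL -EFinM lee_fin lo_pow // /K /A exprMn.
  rewrite le_eqVlt; apply/orP; left; apply/eqP; ring.
have K0 : (0 <= K)%R by rewrite /K mulr_ge0 // mulr_ge0 ?powR_ge0 // ltW.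
have A0 := A_gt0 g; have A1 := A_lt1 g1.
apply: lime_le.
  by apply: is_cvg_ereal_nneg_natsum => n _; rewrite lee_fin mulr_ge0 // exprn_ge0 // ltW.
apply: nearW => n /=.
rewrite sumEFin lee_fin.
have := @geometric_le_lim R n (K * A g) (A g) (mulr_ge0 K0 (ltW A0)) A0.
rewrite ger0_norm; last exact: ltW A0.
move=> /(_ A1).
rewrite /series /geometric /= mulrA.
apply: le_trans; rewrite le_eqVlt; apply/orP; left; apply/eqP.
by apply: eq_bigr => i _; rewrite exprS mulrA.
Qed.
End C.

Unset Implicit Arguments. Set Strict Implicit.

Theorem lemma4 (R : realType) (alpha beta : R) :
  1 < alpha < 2 -> 0 < beta < alpha ->
  exists Chat : R,
    forall (d : nat) (kappa : R), (3 <= d)%N -> 0 < kappa ->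
    beta_eq d alpha kappa beta ->
    forall h : d.-tuple R -> R,
      measurable_fun setT h -> (forall x, 0 <= h x) ->
      (L1norm h < +oo)%E ->
      forall t : R, 0 < t ->
      ((t^-1)%:E * (\int[@lebesgue_measure R]_(tau in Ioc 0 t)
                     L1norm (fun x => (psi alpha beta tau x * h x)%R))%E
       <= Chat%:E * L1norm (fun x => (psi alpha beta t x * h x)%R))%E.
Proof.
move=> /andP[a1 a2] /andP[b0 ba].
set g := alpha^-1 * beta.
have a0 : 0 < alpha by lra.
have g0 : 0 < g by rewrite /g mulr_gt0 // invr_gt0.
have g1 : g < 1 by rewrite /g mulrC ltr_pdivrMr // mul1r.
have hb : 0 < beta < 2 by apply/andP; split; lra.
have A0 := A_gt0 g; have A1 := A_lt1 g1.
set Q := A g / (1 - A g).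
have Q0 : 0 < Q by rewrite /Q divr_gt0 // subr_gt0.
exists (2 * Q).
move=> d kappa _ _ _ h _ h0 _ t t0.
have psi0 : forall (s : R) (x : d.-tuple R), 0 <= psi alpha beta s x.
  move=> s x; rewrite /psi. apply: eta_ge0 => //; rewrite mulr_ge0 ?powR_ge0 //.
  by rewrite /enorm sqrtr_ge0.
set Lt := L1norm (fun x => psi alpha beta t x * h x).
have Lt0 : (0 <= Lt)%E by apply: intRd_ge0 => x; rewrite lee_fin normr_ge0.
have Lbound : forall tau, 0 < tau -> tau <= t ->
    (L1norm (fun x => (psi alpha beta tau x * h x)%R) <=
     (2 * t `^ g * tau `^ (- g))%:E * Lt)%E.
  move=> tau tau0 taut; rewrite /Lt /L1norm.
  have c0 : 0 < 2 * t `^ g * tau `^ (- g) by rewrite !mulr_gt0 // powR_gt0.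
  apply: le_trans; last first.
    by apply: intRd_Z => // x; rewrite lee_fin normr_ge0.
  apply: intRd_le => x; first by rewrite lee_fin normr_ge0.
  rewrite lee_fin !ger0_norm ?mulr_ge0 //.
  rewrite mulrA ler_wpM2r //.
  exact: psi_le.
move: Lt0 Lbound; case: Lt => [l| |] Lt0 Lbound; last first.
- by move: Lt0; rewrite leeNy_eq.
- by rewrite [X in (_ <= X)%E]muleC gt0_mulye ?leey // lte_fin mulr_gt0.
rewrite lee_fin in Lt0.
set m := 2 * t `^ g * l.
have m0 : 0 <= m by rewrite /m mulr_ge0 // mulr_ge0 // powR_ge0.
have I_le : (\int[@lebesgue_measure R]_(tau in Ioc 0 t)
                     L1norm (fun x => (psi alpha beta tau x * h x)%R) <=
            \int[@lebesgue_measure R]_(tau in `]0%R, t]%classic) ((tau `^ (- g)) * m)%:E)%E.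
  apply: le_int_nm => tau; rewrite /Ioc /= in_itv /= => /andP[tau0 taut].
    by apply: intRd_ge0 => x; rewrite lee_fin normr_ge0.
  apply: le_trans (Lbound _ tau0 taut) _.
  by rewrite -EFinM lee_fin /m le_eqVlt; apply/orP; left; apply/eqP; ring.
have gg : 0 < g < 1 by rewrite g0 g1.
have J := int_pow_bound t0 gg m0.
have ti0 : (0 <= (t^-1)%:E)%E by rewrite lee_fin invr_ge0 ltW.
apply: le_trans (lee_wpmul2l ti0 (le_trans I_le J)) _.
rewrite -/Q -!EFinM lee_fin powRN /m.
have tg0 : t `^ g != 0 by rewrite gt_eqF // powR_gt0.
have tn0 : t != 0 by rewrite gt_eqF.
rewrite le_eqVlt; apply/orP; left; apply/eqP; field.
by rewrite tg0 tn0.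
Qed.
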